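(* Let $\tilde L$ be a minimum-size counterexample. Then every element $x\in\tilde L\setminus\{0_{\tilde L},1_{\tilde L}\}$ is comparable with at least four elements of $\tilde L\setminus\{x\}$.
   Context: For a poset $P$, $x$ upper covers $y$ if $y<x$ with nothing strictly between; join-irreducible: upper covers exactly one element. For $x\in P$, ${\uparrow}x=\{y: x\le y\}$. $0_{\tilde L}$ and $1_{\tilde L}$ denote the least and greatest elements. A counterexample is a finite lattice $L$ with $|L|>1$ in which every join-irreducible $j$ satisfies $|{\uparrow}j|>|L|/2$; a minimum-size counterexample is a counterexample $\tilde L$ such that no counterexample has fewer elements. *)

(* Defs.v *)
From mathcomp Require Import all_boot all_order.
Set Implicit Arguments. Unset Strict Implicit. Unset Printing Implicit Defensive.
Import Order.Theory.
Local Open Scope order_scope.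

Definition ucovers (d : Order.disp_t) (P : finPOrderType d) (x y : P) : bool :=
  (y < x) && [forall z : P, ~~ ((y < z) && (z < x))].

Definition join_irr (d : Order.disp_t) (P : finPOrderType d) (j : P) : bool :=
  #|[set y : P | ucovers j y]| == 1%N.

Definition upset (d : Order.disp_t) (P : finPOrderType d) (x : P) : {set P} :=
  [set y : P | x <= y].

(* Counterexample: finite lattice with |L| > 1, every join-irreducible j has
   |up j| > |L|/2  (stated as 2 |up j| > |L| in nat). *)
Definition counterexample (d : Order.disp_t) (L : finTBLatticeType d) : Prop :=
  (1 < #|L|)%N /\ forall j : L, join_irr j -> (#|L| < 2 * #|upset j|)%N.

Definition min_counterexample (d : Order.disp_t) (L : finTBLatticeType d) : Prop :=
  counterexample L /\
  forall (d' : Order.disp_t) (L' : finTBLatticeType d'),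
    counterexample L' -> (#|L| <= #|L'|)%N.

(* Main.v *)
Require Import Defs.
From mathcomp Require Import all_boot all_order.
From mathcomp Require Import zify.
Import Order.Theory.
Local Open Scope order_scope.

Lemma ji_of {d : Order.disp_t} {L : finTBLatticeType d} {j w : L} :
  w < j -> (forall z, z < j -> z <= w) -> join_irr j.
Proof.
move=> wj H; rewrite /join_irr.
have -> : [set y | ucovers j y] = [set w].
  apply/setP => y; rewrite !inE /ucovers.
  apply/idP/idP.
  - case/andP=> yj /forallP nz.
    have yw := H _ yj.
    have := nz w; rewrite wj andbT => nyw.
    by move: yw; rewrite le_eqVlt (negbTE nyw) orbF.
  - move/eqP->; rewrite wj /=; apply/forallP => z; apply/negP=> /andP[wz zj].
    by have := H _ zj; rewrite lt_geF.
by rewrite cards1.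
Qed.

Theorem mainTheorem12 (d : Order.disp_t) (L : finTBLatticeType d) :
  min_counterexample L ->
  forall x : L, x != \bot -> x != \top ->
    (4 <= #|[set y : L | (y != x) && (x >=< y)]|)%N.
Proof.
move=> [[n1 Hce] _] x x0 x1.
set S := [set y : L | _].
set I := [set w : L | ~~ (x >=< w)].
rewrite leqNgt; apply/negP => HS.
have b1 : (\bot : L) != \top.
  apply: contraNneq x0 => e; rewrite eq_le le0x andbT e; exact: lex1.
have bS : \bot \in S by rewrite inE eq_sym x0 ge_comparable ?le0x.
have tS : \top \in S by rewrite inE eq_sym x1 le_comparable ?lex1.
have cnt : #|L| = (#|S| + 1 + #|I|)%N.
  have eC : I = ~: [set w | x >=< w] by apply/setP => w; rewrite !inE.
  rewrite eC -(cardsC [set w | x >=< w]) (cardsD1 x) inE comparablexx.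
  have -> : [set w | x >=< w] :\ x = S.
    by apply/setP => w; rewrite !inE.
  clear -x; lia.
have class : forall w, w = x \/ w \in S \/ w \in I.
  move=> w; case: (eqVneq w x) => [->|wx]; first by left.
  right; case: (boolP (x >=< w)) => c.
    by left; rewrite inE wx c.
  by right; rewrite inE c.
have up : forall j : L, join_irr j -> (#|L| < 2 * #|upset j|)%N by [].
have ntop : forall w : L, w < \top -> ~ (forall z, z < \top -> z <= w).
  move=> w wt H.
  have := up _ (ji_of wt H).
  have -> : upset (\top : L) = [set \top].
    by apply/setP => y; rewrite !inE le1x.
  rewrite cards1; clear -n1; lia.
have xlt : x < \top by rewrite ltx1.
have gtx : \bot < x by rewrite lt0x.
case: (boolP [exists y in S, (y != \bot) && (y != \top)]) => [/existsP [y /andP [yS /andP [yb yt]]] | /existsPn HA'].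
-
  have tS' : \top \in S :\ \bot by rewrite in_setD1 eq_sym b1 tS.
  have c2 : #|S| = (2 + #|S :\ \bot :\ \top|)%N.
    by rewrite (cardsD1 \bot) bS (cardsD1 \top (S :\ \bot)) tS'.
  have yS' : y \in S :\ \bot :\ \top by rewrite !in_setD1 yb yt yS.
  have le1 : (#|S :\ \bot :\ \top| <= 1)%N by clear -HS c2; lia.
  have HB : forall w, w \in S -> w = \bot \/ w = \top \/ w = y.
    move=> w wS; case: (eqVneq w \bot) => [->|wb]; first by left.
    case: (eqVneq w \top) => [->|wt]; first by right; left.
    right; right; move/card_le1_eqP: le1 => E; apply: (E y w yS').
    by rewrite !in_setD1 wb wt wS.
  have cS : (0 < #|S :\ \bot :\ \top|)%N by apply/card_gt0P; exists y.
  have S3 : #|S| = 3 by clear -le1 cS c2; lia.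
  move: (yS); rewrite inE => /andP [yx /orP [xy|yx']].
  +
    have xy' : x < y by rewrite lt_neqAle eq_sym yx xy.
    have jx : join_irr x.
      apply: (ji_of gtx) => z zx.
      have zS : z \in S by rewrite inE (lt_eqF zx) ge_comparable // ltW.
      case: (HB _ zS) => [->|[zt|zy]] //.
      * by move: zx; rewrite zt => /lt_geF; rewrite lex1.
      * by move: zx; rewrite zy => /(lt_trans xy'); rewrite ltxx.
    have ub : (#|upset x| <= 3)%N.
      apply: (@leq_trans #|[set x; y; \top]|).
        apply: subset_leq_card; apply/subsetP => w; rewrite inE => xw.
        case: (class w) => [->|[wS|wI]]; first by rewrite !inE eqxx.
        case: (HB _ wS) => [wb|[->|->]]; try by rewrite !inE eqxx ?orbT.
        by move: x0; rewrite wb in xw; rewrite eq_le xw le0x.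
        by move: wI; rewrite inE le_comparable.
      apply: leq_trans (leq_card_setU _ _) _; rewrite cards1 -[3]/(2+1) leq_add2r.
      apply: leq_trans (leq_card_setU _ _) _; rewrite !cards1 //.
    have := up _ jx => nlt.
    have I1 : (#|I| <= 1)%N by clear -nlt ub cnt S3; lia.
    have yt' : y < \top by rewrite ltx1.
    case: (ntop _ yt') => z zt.
    case: (boolP (z <= y)) => // zy; exfalso.
    have zI : z \in I.
      case: (class z) => [zx|[zS|//]].
        by move: zy; rewrite zx xy.
      case: (HB _ zS) => [zb|[zt'|zy']].
      * by move: zy; rewrite zb le0x.
      * by move: zt; rewrite zt' ltxx.
      * by move: zy; rewrite zy' lexx.
    have Iz : forall w, w \in I -> w = z.
      move=> w wI; move/card_le1_eqP: I1 => E; exact: (E z w zI wI).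
    have zb : \bot < z.
      rewrite lt0x; apply: contraTneq zI => ->; rewrite inE ge_comparable ?le0x //.
    have jz : join_irr z.
      apply: (ji_of zb) => w wz.
      case: (class w) => [wx|[wS|wI]].
      * by move: zI; rewrite inE le_comparable // -wx (ltW wz).
      * case: (HB _ wS) => [->|[wt|wy]] //.
          by move: wz; rewrite wt => /lt_geF; rewrite lex1.
        move: zI; rewrite inE le_comparable //.
        apply: (le_trans xy); rewrite -wy; exact: ltW.
      * by move: wz; rewrite (Iz _ wI) ltxx.
    have := up _ jz.
    have ub2 : (#|upset z| <= 2)%N.
      apply: (@leq_trans #|[set z; \top]|); last by rewrite cards2 ltnS leq_b1.
      apply: subset_leq_card; apply/subsetP => w; rewrite inE => zw.
      case: (class w) => [wx|[wS|wI]].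
      * by move: zI; rewrite inE ge_comparable // -wx zw.
      * case: (HB _ wS) => [wb|[->|wy]]; try by rewrite !inE eqxx ?orbT.
          by rewrite wb (lt_geF zb) in zw.
        by move: zy; rewrite -wy zw.
      * by rewrite (Iz _ wI) !inE eqxx.
    clear -ub2 cnt S3; lia.
  +
    have yx2 : y < x by rewrite lt_neqAle yx yx'.
    have jx : join_irr x.
      apply: (ji_of yx2) => z zx.
      have zS : z \in S by rewrite inE (lt_eqF zx) ge_comparable // ltW.
      case: (HB _ zS) => [->|[zt|->]] //.
      by move: zx; rewrite zt => /lt_geF; rewrite lex1.
    have ub : (#|upset x| <= 2)%N.
      apply: (@leq_trans #|[set x; \top]|); last by rewrite cards2 ltnS leq_b1.
      apply: subset_leq_card; apply/subsetP => w; rewrite inE => xw.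
      case: (class w) => [->|[wS|wI]]; first by rewrite !inE eqxx.
      case: (HB _ wS) => [wb|[->|wy]]; try by rewrite !inE eqxx ?orbT.
        by move: x0; rewrite wb in xw; rewrite eq_le xw le0x.
        by rewrite wy (lt_geF yx2) in xw.
      by move: wI; rewrite inE le_comparable.
    have := up _ jx; clear -ub cnt S3; lia.
-
  have HA : forall w, w \in S -> w = \bot \/ w = \top.
    move=> w wS; have := HA' w; rewrite wS /= negb_and !negbK.
    by case/orP => /eqP; [left|right].
  have S2 : #|S| = 2.
    have -> : S = [set \bot; \top].
      apply/setP => w; apply/idP/idP.
        by case/HA => ->; rewrite !inE eqxx ?orbT.
      by rewrite in_set2 => /orP [] /eqP ->.
    by rewrite cards2 b1.
  have jx : join_irr x.
    apply: (ji_of gtx) => z zx.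
    have zS : z \in S by rewrite inE (lt_eqF zx) ge_comparable // ltW.
    case: (HA _ zS) => [->|zt] //.
    by move: zx; rewrite zt => /lt_geF; rewrite lex1.
  have ub : (#|upset x| <= 2)%N.
    apply: (@leq_trans #|[set x; \top]|); last by rewrite cards2 ltnS leq_b1.
    apply: subset_leq_card; apply/subsetP => w; rewrite inE => xw.
    case: (class w) => [->|[wS|wI]]; first by rewrite !inE eqxx.
    case: (HA _ wS) => [wb|->]; last by rewrite !inE eqxx ?orbT.
      by move: x0; rewrite wb in xw; rewrite eq_le xw le0x.
    by move: wI; rewrite inE le_comparable.
  have := up _ jx => nlt.
  have I0 : #|I| = 0%N by clear -nlt ub cnt S2; lia.
  apply: (ntop _ xlt) => z zt.
  case: (class z) => [->|[zS|zI]] //.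
    case: (HA _ zS) => [->|zt']; first exact: le0x.
    by move: zt; rewrite zt' ltxx.
  by move: I0; rewrite (cardsD1 z) zI.
Qed.
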